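(* For every (finite or infinite) cardinal $\kappa$ there is a cardinal $\lambda_\kappa \leq \mathsf{exp}_{10}(\kappa)$ such that every $\kappa$-edge-coloured (possibly infinite) tournament $T$ admits a king-serf duo by monochromatic paths of size at most $\lambda_\kappa$. Moreover, for finite $\kappa$ one can guarantee $\lambda_\kappa \leq \kappa^{62500\kappa}$.
   Context: A tournament $T=(V(T),A(T))$ is a directed graph obtained by orienting every edge of a (possibly infinite) complete undirected graph. For a cardinal $\kappa$, $\mathsf{exp}_0(\kappa)=\kappa$ and $\mathsf{exp}_{k+1}(\kappa)=2^{\mathsf{exp}_k(\kappa)}$. A cardinal is identified with the set of smaller ordinals. A $\kappa$-edge-colouring of $T$ is a function $c:A(T)\to\kappa$. A monochromatic path is a directed path (no repeated vertices) all of whose edges have the same colour. A king-serf duo by monochromatic paths in an edge-coloured tournament $T$ is a pair of disjoint vertex sets $K,S\subseteq V(T)$ such that every vertex $v$ has a monochromatic path of length at most two from some vertex of $K$ to $v$ or from $v$ to some vertex of $S$. Its size is $|K|+|S|$. *)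

(* Defs.v *)
From HB Require Import structures.
From mathcomp Require Import all_boot.
From mathcomp Require Import boolp classical_sets functions cardinality.
Set Implicit Arguments. Unset Strict Implicit. Unset Printing Implicit Defensive.
Local Open Scope classical_set_scope.

Definition tournament (V : Type) (E : V -> V -> bool) : Prop :=
  (forall v, ~~ E v v) /\
  (forall u v, u <> v -> (E u v || E v u)) /\
  (forall u v, E u v -> ~~ E v u).

Definition colouring (V Col : Type) (E : V -> V -> bool) :=
  forall u v : V, E u v -> Col.

Definition mono_path_le2 (V Col : Type) (E : V -> V -> bool)
    (c : colouring Col E) (x y : V) : Prop :=
  x = y \/ E x y \/
  exists (z : V) (h1 : E x z) (h2 : E z y),
    [/\ x <> z, z <> y, x <> y & c x z h1 = c z y h2].

Definition king_serf_duo (V Col : Type) (E : V -> V -> bool)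
    (c : colouring Col E) (K S : set V) : Prop :=
  K `&` S = set0 /\
  forall v : V,
    (exists2 k, K k & mono_path_le2 c k v) \/
    (exists2 s, S s & mono_path_le2 c v s).

(* exp_0(T) = T, exp_{n+1}(T) = power set of exp_n(T); so the cardinality of
   expT n T is exp_n(|T|). *)
Fixpoint expT (n : nat) (T : Type) : Type :=
  match n with
  | 0 => T
  | n.+1 => set (expT n T)
  end.

(* Main.v *)
Require Import Defs.
From HB Require Import structures.
From mathcomp Require Import all_boot.
From mathcomp Require Import boolp classical_sets functions cardinality.
From mathcomp Require Import zify.
Local Open Scope classical_set_scope.
Local Open Scope card_scope.
Set Implicit Arguments. Unset Strict Implicit.



Definition cinP {Col V : Type} {E : V -> V -> bool} (c : colouring Col E)
  (X : set V) (v : V) : set Col :=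
  fun a => exists u (h : E u v), X u /\ c u v h = a.
Definition coutP {Col V : Type} {E : V -> V -> bool} (c : colouring Col E)
  (X : set V) (v : V) : set Col :=
  fun a => exists w (h : E v w), X w /\ c v w h = a.
Definition typ {Col V : Type} {E : V -> V -> bool} (c : colouring Col E)
  (X : set V) (v : V) := (cinP c X v, coutP c X v).
Definition intcol {Col V : Type} {E : V -> V -> bool} (c : colouring Col E)
  (X : set V) : set Col :=
  fun a => exists u w (h : E u w), X u /\ X w /\ c u w h = a.
Definition resolved {Col V : Type} {E : V -> V -> bool} (c : colouring Col E)
  (X : set V) := exists v, X v /\ cinP c X v `<=` coutP c X v.
Definition child {Col V : Type} {E : V -> V -> bool} (c : colouring Col E)
  (X : set V) (t : set Col * set Col) : set V :=
  fun v => X v /\ typ c X v = t.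
Definition capF {V : Type} (F : set (set V)) : set V := fun x => forall X, F X -> X x.

Inductive node {Col V : Type} {E : V -> V -> bool} (c : colouring Col E) : set V -> Prop :=
| nT : node c setT
| nC X t : node c X -> ~ resolved c X -> node c (child c X t)
| nL (F : set (set V)) : (forall X, F X -> node c X) -> node c (capF F).

Definition subn {Col V : Type} {E : V -> V -> bool} (c : colouring Col E) (M N : set V) :=
  ~ resolved c N /\ exists t, M `<=` child c N t.
Definition rel {Col V : Type} {E : V -> V -> bool} (c : colouring Col E) (N M : set V) :=
  N `&` M = set0 \/ N = M \/ subn c N M \/ subn c M N.


Lemma child_sub {Col V : Type} {E : V -> V -> bool} (c : colouring Col E) X t :
  child c X t `<=` X.
Proof. by move=> v []. Qed.

Lemma child_typ {Col V : Type} {E : V -> V -> bool} (c : colouring Col E) X t v :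
  child c X t v -> typ c X v = t.
Proof. by case. Qed.

Lemma subn_sub {Col V : Type} {E : V -> V -> bool} (c : colouring Col E) M N :
  subn c M N -> M `<=` N.
Proof. by move=> [_ [t /subset_trans]]; apply; apply: child_sub. Qed.

Lemma disj_of {V : Type} (A B : set V) : (forall x, A x -> B x -> False) -> A `&` B = set0.
Proof. by move=> H; apply/seteqP; split=> // x [/H]. Qed.

Lemma inner {Col V : Type} {E : V -> V -> bool} (c : colouring Col E) (N : set V) :
  (forall M, node c M -> N `<=` M -> rel c N M) -> forall M, node c M -> rel c N M.
Proof.
move=> br M HM; elim: HM.
- by apply: br; [exact: nT|].
- move=> Y s HY IHY Hres; case: IHY => [D|[EY|[[_ [s' Hs']]|[Hn [t Ht]]]]].
  + left; apply: disj_of => x Nx [Yx _].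
    by have : (N `&` Y) x by []; rewrite D.
  + by subst Y; right; right; right; split=> //; exists s.
  + have [Es|ne] := pselect (s' = s).
      by subst s'; apply: br => //; exact: nC.
    left; apply: disj_of => x /Hs' [_ e1] [_ e2]; apply: ne; by rewrite -e1 e2.
  + right; right; right; split=> //; exists t.
    by apply: subset_trans Ht; apply: child_sub.
- move=> G HG IH.
  have [[C [GC D]]|nD] := pselect (exists C, G C /\ N `&` C = set0).
    left; apply: disj_of => x Nx Gx.
    have : (N `&` C) x by split=> //; apply: Gx.
    by rewrite D.
  have [[C [GC [Hn [t Ht]]]]|nS] := pselect (exists C, G C /\ subn c C N).
    right; right; right; split=> //; exists t.
    by apply: subset_trans Ht => x Gx; apply: Gx.
  apply: br; first exact: nL.
  move=> x Nx C GC; case: (IH C GC) => [D|[<-//|[/subn_sub|S]]].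
  + by case: nD; exists C.
  + by apply.
  + by case: nS; exists C.
Qed.

Lemma child_disj {Col V : Type} {E : V -> V -> bool} (c : colouring Col E) X t t' x :
  child c X t x -> child c X t' x -> t = t'.
Proof. by move=> [_ <-] [_ <-]. Qed.

Lemma rel_all {Col V : Type} {E : V -> V -> bool} (c : colouring Col E) N :
  node c N -> forall M, node c M -> rel c N M.
Proof.
elim=> [|X t HX IHX Hres|F HF IHF]; apply: inner.
- move=> M HM TM; right; left; apply/seteqP; split=> // x _; exact: TM.
- move=> M HM NM; case: (IHX M HM) => [D|[EX|[[Hn [t' Ht']]|[Hn [t' Ht']]]]].
  + left; apply: disj_of => x [Xx _] Mx.
    by have : (X `&` M) x by []; rewrite D.
  + by subst X; right; right; left; split=> //; exists t.
  + right; right; left; split=> //; exists t'.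
    by apply: subset_trans Ht'; apply: child_sub.
  + have [Et|ne] := pselect (t' = t).
      subst t'; right; left; apply/seteqP; split=> //.
    left; apply: disj_of => x Nx Mx; apply: ne.
    by apply: (child_disj (Ht' _ Mx)).
- move=> M HM NM.
  have [[C [FC D]]|nD] := pselect (exists C, F C /\ C `&` M = set0).
    left; apply: disj_of => x Nx Mx.
    have : (C `&` M) x by split=> //; apply: Nx.
    by rewrite D.
  have [[C [FC [Hn [t Ht]]]]|nS] := pselect (exists C, F C /\ subn c C M).
    right; right; left; split=> //; exists t.
    by apply: subset_trans Ht => x Nx; apply: Nx.
  right; left; apply/seteqP; split=> // x Mx C FC.
  case: (IHF C FC M HM) => [D|[EC|[S|/subn_sub]]].
  + by case: nD; exists C.
  + by rewrite EC.
  + by case: nS; exists C.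
  + by apply.
Qed.

Definition Fin {Col V : Type} {E : V -> V -> bool} (c : colouring Col E) (u : V) : set V :=
  capF [set N | node c N /\ N u].

Lemma Fin_node {Col V : Type} {E : V -> V -> bool} (c : colouring Col E) u : node c (Fin c u).
Proof. by apply: nL => X []. Qed.

Lemma Fin_mem {Col V : Type} {E : V -> V -> bool} (c : colouring Col E) u : Fin c u u.
Proof. by move=> X []. Qed.

Lemma Fin_min {Col V : Type} {E : V -> V -> bool} (c : colouring Col E) u N :
  node c N -> N u -> Fin c u `<=` N.
Proof. by move=> HN Nu x; apply. Qed.

Lemma child_full {Col V : Type} {E : V -> V -> bool} (c : colouring Col E) Z t v :
  Z `<=` child c Z t -> Z v -> cinP c Z v `<=` coutP c Z v.
Proof.
move=> Zt Zv a [u [h [Zu <-]]].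
have [_ tu] := Zt u Zu; have [_ tv] := Zt v Zv.
have : coutP c Z u (c u v h) by exists v, h.
by rewrite -[coutP c Z u]/((typ c Z u).2) tu -tv.
Qed.

Lemma Fin_res {Col V : Type} {E : V -> V -> bool} (c : colouring Col E) u :
  resolved c (Fin c u).
Proof.
apply: contrapT => nr.
have Hc : node c (child c (Fin c u) (typ c (Fin c u) u)) by apply: nC => //; exact: Fin_node.
have sub : Fin c u `<=` child c (Fin c u) (typ c (Fin c u) u).
  by apply: Fin_min => //; split=> //; exact: Fin_mem.
apply: nr; exists u; split; first exact: Fin_mem.
by apply: child_full sub _; exact: Fin_mem.
Qed.

Lemma Fin_eq {Col V : Type} {E : V -> V -> bool} (c : colouring Col E) u x :
  Fin c u x -> Fin c x = Fin c u.
Proof.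
move=> ux; have sub : Fin c x `<=` Fin c u by apply: Fin_min => //; exact: Fin_node.
case: (rel_all (Fin_node c x) (Fin_node c u)) => [D|[//|[[nr _]|[nr _]]]].
- have : (Fin c x `&` Fin c u) x by split=> //; exact: Fin_mem.
  by rewrite D.
- by case: nr; exact: Fin_res.
- by case: nr; exact: Fin_res.
Qed.

Lemma strict {Col V : Type} {E : V -> V -> bool} (c : colouring Col E) Y M v :
  Y v -> M `<=` child c Y (typ c Y v) -> intcol c Y `<=` intcol c M ->
  cinP c Y v `<=` coutP c Y v.
Proof.
move=> Yv MY YM a [u [h [Yu <-]]].
have : intcol c Y (c u v h) by exists u, v, h.
move=> /YM [a' [b' [h' [Ma' [Mb' e]]]]].
have [Ya' ta'] := MY a' Ma'; have [Yb' _] := MY b' Mb'.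
have : coutP c Y a' (c a' b' h') by exists b', h'.
by rewrite -[coutP c Y a']/((typ c Y a').2) ta' e.
Qed.

Definition lab {Col V : Type} {E : V -> V -> bool} (c : colouring Col E) (N : set V) :
  set (set Col * (set Col * set Col)) :=
  [set p | exists Y x, node c Y /\ N `<=` Y /\ N x /\ p = (intcol c Y, typ c Y x)].

Lemma lab_inj {Col V : Type} {E : V -> V -> bool} (c : colouring Col E) u w :
  lab c (Fin c u) = lab c (Fin c w) -> Fin c u = Fin c w.
Proof.
move=> El; apply: contrapT => neF.
pose Z := capF [set Y | node c Y /\ Y u /\ Y w].
have HZ : node c Z by apply: nL => X [].
have Zu : Z u by move=> X [_ []].
have Zw : Z w by move=> X [_ []].
have uZ : Fin c u `<=` Z by move=> x Fx X [HX [Xu _]]; exact: (Fin_min HX Xu).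
have wZ : Fin c w `<=` Z by move=> x Fx X [HX [_ Xw]]; exact: (Fin_min HX Xw).
have nres : ~ resolved c Z /\ exists t, Fin c u `<=` child c Z t.
  case: (rel_all (Fin_node c u) HZ) => [D|[EZ|[S|[nr _]]]]; [exfalso|exfalso|exact S|exfalso].
  - have : (Fin c u `&` Z) u by split=> //; exact: Fin_mem.
    by rewrite D.
  - have H : Fin c u w by rewrite EZ.
    by apply: neF; rewrite (Fin_eq H).
  - by apply: nr; exact: Fin_res.
have nresw : ~ resolved c Z /\ exists t, Fin c w `<=` child c Z t.
  case: (rel_all (Fin_node c w) HZ) => [D|[EZ|[S|[nr _]]]]; [exfalso|exfalso|exact S|exfalso].
  - have : (Fin c w `&` Z) w by split=> //; exact: Fin_mem.
    by rewrite D.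
  - have H : Fin c w u by rewrite EZ.
    by apply: neF; rewrite (Fin_eq H).
  - by apply: nr; exact: Fin_res.
case: nres => nrZ [t Ht]; case: nresw => _ [t' Ht'].
have Fu : Fin c u u by exact: Fin_mem.
have Fw : Fin c w w by exact: Fin_mem.
have tu : typ c Z u = t by apply: (child_typ (Ht u Fu)).
have tw : typ c Z w = t' by apply: (child_typ (Ht' w Fw)).
have ntt : t <> t'.
  move=> ett; subst t'.
  have Hc : node c (child c Z t) by exact: nC.
  have : Z `<=` child c Z t.
    by move=> x Zx; apply: Zx; split; [exact: Hc | split; [exact: Ht u Fu | rewrite ett; exact: Ht' w Fw]].
  move=> H0; apply: nrZ; exists u; split=> //; exact: (child_full H0 Zu).
have : lab c (Fin c u) (intcol c Z, typ c Z u).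
  by exists Z, u; split=> //; split=> //; split=> //.
rewrite El => -[Y [x [HY [wY [Fx e]]]]].
have eI := f_equal fst e; have eT := f_equal snd e; simpl in eI, eT.
have Yw : Y w by apply: wY.
case: (rel_all HY HZ) => [D|[EY|[[nrY [s Hs]]|[nrY [s Hs]]]]].
- have : (Y `&` Z) w by [].
  by rewrite D.
- apply: ntt; rewrite -tu eT EY.
  by apply: (child_typ (Ht' x Fx)).
- have es : s = typ c Z w by rewrite (child_typ (Hs w Yw)).
  subst s; apply: nrZ; exists w; split=> //.
  by apply: (strict Zw Hs); rewrite eI.
- have Yw' : typ c Y w = s by apply: (child_typ (Hs w Zw)).
  subst s; apply: nrY; exists w; split=> //.
  by apply: (strict Yw Hs); rewrite eI.
Qed.



Definition cov {Col V : Type} {E : V -> V -> bool} (c : colouring Col E) (K S : set V) x :=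
  (exists2 k, K k & mono_path_le2 c k x) \/ (exists2 s, S s & mono_path_le2 c x s).

Lemma cov_mono {Col V : Type} {E : V -> V -> bool} (c : colouring Col E) (K S K' S' : set V) x :
  K `<=` K' -> S `<=` S' -> cov c K S x -> cov c K' S' x.
Proof.
move=> KK SS [[k Kk p]|[s Ss p]]; [left; exists k | right; exists s] => //.
- exact: KK. - exact: SS.
Qed.

Definition helper {Col V : Type} {E : V -> V -> bool} (c : colouring Col E)
  (X : set V) (v : V) (a : Col) : option V :=
  match pselect (coutP c X v a) with
  | left h => Some (proj1_sig (cid h))
  | right _ => None
  end.

Lemma helper_spec {Col V : Type} {E : V -> V -> bool} (c : colouring Col E) X v a w :
  helper c X v a = Some w -> exists h : E v w, X w /\ c v w h = a.
Proof.
rewrite /helper; case: pselect => // h [<-].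
exact: (proj2_sig (cid h)).
Qed.

Lemma helper_ex {Col V : Type} {E : V -> V -> bool} (c : colouring Col E) X v a :
  coutP c X v a -> exists w, helper c X v a = Some w.
Proof. by rewrite /helper; case: pselect => // h _; eexists. Qed.

Definition Serfs {Col V : Type} {E : V -> V -> bool} (c : colouring Col E) (X : set V) v :=
  [set w | exists a, helper c X v a = Some w].

Lemma res_duo {Col V : Type} {E : V -> V -> bool} (c : colouring Col E) X v :
  tournament E -> X v -> cinP c X v `<=` coutP c X v ->
  [/\ [set v] `&` Serfs c X v = set0, Serfs c X v `<=` X &
      forall x, X x -> cov c [set v] (Serfs c X v) x].
Proof.
move=> [irr [tot anti]] Xv sub; split.
- apply: disj_of => x ex [a ha]; have [h _] := helper_spec ha.
  have ex' : x = v := ex; subst x; by move: (irr v); rewrite h.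
- by move=> w [a ha]; have [h []] := helper_spec ha.
move=> x Xx.
have [->|nxv] := pselect (x = v).
  by left; exists v => //; left.
have /orP [h|h] := tot _ _ (nesym nxv).
  by left; exists v => //; right; left.
have ci : cinP c X v (c x v h) by exists x, h.
have [w hw] := helper_ex (sub _ ci); have [h' [Xw e]] := helper_spec hw.
right; exists w; first by exists (c x v h).
have [->|nxw] := pselect (x = w); first by left.
right; right; exists v, h, h'; split=> //.
by move=> evw; subst w; move: (irr v); rewrite h'.
Qed.



Lemma inj_le (T U : Type) (A : set T) (f : T -> U) :
  (forall x y, A x -> A y -> f x = f y -> x = y) -> A #<= [set: U].
Proof.
move=> finj.
have [[x0 Ax0]|nA] := pselect (exists x, A x); last first.
  have -> : A = set0 by apply/seteqP; split=> // x Ax; apply: nA; exists x.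
  exact: card_ge0.
pose g (y : U) : T := match pselect (exists x, A x /\ f x = y) with
  | left h => proj1_sig (cid h) | right _ => x0 end.
have sub : A `<=` g @` [set: U].
  move=> x Ax; exists (f x) => //; rewrite /g; case: pselect => [h|n]; last first.
    by case: n; exists x.
  have [Ax' e] := proj2_sig (cid h); exact: finj.
exact: card_le_trans (subset_card_le sub) (card_image_le g _).
Qed.

Definition kingopt {Col V : Type} {E : V -> V -> bool} (c : colouring Col E) (N : set V) : option V :=
  match pselect (resolved c N) with
  | left h => Some (proj1_sig (cid h)) | right _ => None end.

Lemma kingopt_spec {Col V : Type} {E : V -> V -> bool} (c : colouring Col E) N v :
  kingopt c N = Some v -> N v /\ cinP c N v `<=` coutP c N v.
Proof. by rewrite /kingopt; case: pselect => // h [<-]; exact: (proj2_sig (cid h)). Qed.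

Lemma kingopt_ex {Col V : Type} {E : V -> V -> bool} (c : colouring Col E) N :
  resolved c N -> exists v, kingopt c N = Some v.
Proof. by rewrite /kingopt; case: pselect => // h _; eexists. Qed.

Definition Kg {Col V : Type} {E : V -> V -> bool} (c : colouring Col E) : set V :=
  [set x | exists u, kingopt c (Fin c u) = Some x].
Definition Sg {Col V : Type} {E : V -> V -> bool} (c : colouring Col E) : set V :=
  [set x | exists u v, kingopt c (Fin c u) = Some v /\ Serfs c (Fin c u) v x].

Lemma Kg_fin {Col V : Type} {E : V -> V -> bool} (c : colouring Col E) x :
  Kg c x -> kingopt c (Fin c x) = Some x.
Proof.
move=> [u ku]; have [Fx _] := kingopt_spec ku.
by rewrite (Fin_eq Fx).
Qed.

Lemma Sg_fin {Col V : Type} {E : V -> V -> bool} (c : colouring Col E) x :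
  Sg c x -> exists v a, kingopt c (Fin c x) = Some v /\ helper c (Fin c x) v a = Some x.
Proof.
move=> [u [v [kv [a ha]]]]; have [h [Fx _]] := helper_spec ha.
by exists v, a; rewrite (Fin_eq Fx).
Qed.

Lemma gen_duo {Col V : Type} {E : V -> V -> bool} (c : colouring Col E) :
  tournament E -> king_serf_duo c (Kg c) (Sg c).
Proof.
move=> tour; split.
- apply: disj_of => x kx0 sx0; have kx := Kg_fin kx0; have [v [a [kv ha]]] := Sg_fin sx0.
  move: kx; rewrite kv => -[exv]; subst v.
  have [h _] := helper_spec ha; case: tour => irr _; by move: (irr x); rewrite h.
- move=> y.
  have [v kv] := kingopt_ex (Fin_res c y).
  have [Fv sub] := kingopt_spec kv.
  have [_ _ H] := res_duo tour Fv sub.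
  apply: (@cov_mono _ _ _ c [set v] (Serfs c (Fin c y) v) (Kg c) (Sg c) y _ _ (H y (@Fin_mem _ _ _ c y))).
  + by move=> x ->; exists y.
  + by move=> x sx; exists y, v.
Qed.

Definition tag {Col V : Type} {E : V -> V -> bool} (c : colouring Col E) (x : V) : option Col :=
  match pselect (exists a v, kingopt c (Fin c x) = Some v /\ helper c (Fin c x) v a = Some x) with
  | left h => Some (proj1_sig (cid h)) | right _ => None end.

Lemma tag_spec {Col V : Type} {E : V -> V -> bool} (c : colouring Col E) x a :
  tag c x = Some a -> exists v, kingopt c (Fin c x) = Some v /\ helper c (Fin c x) v a = Some x.
Proof. by rewrite /tag; case: pselect => // h [<-]; exact: (proj2_sig (cid h)). Qed.

Lemma tag_none {Col V : Type} {E : V -> V -> bool} (c : colouring Col E) x :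
  tag c x = None -> ~ exists a v, kingopt c (Fin c x) = Some v /\ helper c (Fin c x) v a = Some x.
Proof. by rewrite /tag; case: pselect. Qed.

Lemma gen_card {Col V : Type} {E : V -> V -> bool} (c : colouring Col E) :
  (Kg c `|` Sg c) #<= [set: set (set Col * (set Col * set Col)) * option Col].
Proof.
apply: (@inj_le _ _ _ (fun x => (lab c (Fin c x), tag c x))).
move=> x y Hx Hy [eL eT]; have eF := lab_inj eL.
case Ex: (tag c x) eT => [a|] eT.
- have [v [kv hv]] := tag_spec Ex.
  have [v' [kv' hv']] := tag_spec (esym eT).
  rewrite -eF kv in kv'; case: kv' => evv; subst v'.
  by move: hv'; rewrite -eF hv => -[].
- have nx := tag_none Ex; have ny := tag_none (esym eT).
  have kx : kingopt c (Fin c x) = Some x.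
    case: Hx => [H|H]; first exact: Kg_fin H.
    have [v [a [kv ha]]] := Sg_fin H; case: nx; by exists a, v.
  have ky : kingopt c (Fin c y) = Some y.
    case: Hy => [H|H]; first exact: Kg_fin H.
    have [v [a [kv ha]]] := Sg_fin H; case: ny; by exists a, v.
  by move: kx; rewrite eF ky => -[].
Qed.



Definition up {T : Type} (x : T) : set T := [set x].
Lemma up_inj {T : Type} (x y : T) : up x = up y -> x = y.
Proof. by move=> e; have : up x x by []; rewrite e. Qed.

Definition kp {T : Type} (a b : T) : set (set T) := [set Z | Z = [set a] \/ Z = [set a] `|` [set b]].

Lemma set1_eqU {T : Type} (a x y : T) : [set a] = [set x] `|` [set y] -> x = a /\ y = a.
Proof.
move=> e; split.
- by have : [set a] x by rewrite e; left.
- by have : [set a] y by rewrite e; right.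
Qed.

Lemma kp_inj {T : Type} (a b a' b' : T) : kp a b = kp a' b' -> a = a' /\ b = b'.
Proof.
move=> e.
have h1 : kp a' b' [set a] by rewrite -e; left.
have aa : a = a'.
  case: h1 => [e1|e1].
  - by have : [set a'] a by rewrite -e1.
  - by have [-> _] := set1_eqU e1.
subst a'; split => //.
have h2 : kp a b' ([set a] `|` [set b]) by rewrite -e; right.
have h3 : kp a b ([set a] `|` [set b']) by rewrite e; right.
case: h2 => [e2|e2].
- have [_ eb] := set1_eqU (esym e2); subst b.
  case: h3 => [e3|e3].
  + by have [_ ->] := set1_eqU (esym e3).
  + have : ([set a] `|` [set a]) b' by rewrite -e3; right.
    by case.
- have : ([set a] `|` [set b']) b by rewrite -e2; right.
  case => // eba; have eba' : b = a := eba; subst b.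
  have : ([set a] `|` [set a]) b' by rewrite e2; right.
  by case.
Qed.

Definition opt {Col : Type} (o : option Col) : set Col :=
  match o with Some a => [set a] | None => set0 end.
Lemma opt_inj {Col : Type} (o o' : option Col) : opt o = opt o' -> o = o'.
Proof.
case: o => [a|]; case: o' => [a'|] //= e.
- have : [set a'] a by rewrite -e.
  by move=> ->.
- by have : (set0 : set Col) a by rewrite -e.
- by have : (set0 : set Col) a' by rewrite e.
Qed.

Definition tr {Col : Type} (q : set Col * (set Col * set Col)) : set (set (set (set (set Col)))) :=
  kp (up (up q.1)) (kp q.2.1 q.2.2).
Lemma tr_inj {Col : Type} (q q' : set Col * (set Col * set Col)) : tr q = tr q' -> q = q'.
Proof.
case: q => [d [i o]]; case: q' => [d' [i' o']]; rewrite /tr /= => e.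
have [e1 e2] := kp_inj e; have [e3 e4] := kp_inj e2.
by rewrite (up_inj (up_inj e1)) e3 e4.
Qed.

Lemma img_inj {A B : Type} (f : A -> B) (X Y : set A) :
  (forall x y, f x = f y -> x = y) -> f @` X = f @` Y -> X = Y.
Proof.
move=> finj e; apply/seteqP; split=> x Xx.
- have : (f @` Y) (f x) by rewrite -e; exists x.
  by case=> y Yy /finj <-.
- have : (f @` X) (f x) by rewrite e; exists x.
  by case=> y Yy /finj <-.
Qed.

Definition emb {Col : Type} (p : set (set Col * (set Col * set Col)) * option Col) : expT 10 Col :=
  up (up (kp (tr @` p.1) (up (up (up (up (up (opt p.2)))))))).

Lemma emb_inj {Col : Type} p q : @emb Col p = emb q -> p = q.
Proof.
case: p => [A o]; case: q => [B o']; rewrite /emb /= => e.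
have [e1 e2] := kp_inj (up_inj (up_inj e)).
have -> := img_inj (@tr_inj Col) e1.
by rewrite (opt_inj (up_inj (up_inj (up_inj (up_inj (up_inj e2)))))).
Qed.



Fixpoint inl {V : Type} (x : V) (s : seq V) : Prop :=
  if s is y :: t then y = x \/ inl x t else False.

Lemma inl_nth {V : Type} (x0 x : V) (t : seq V) :
  inl x t -> exists2 i, i < size t & nth x0 t i = x.
Proof.
elim: t => [//|y t IH] /= [->|/IH [i it e]]; first by exists 0.
by exists i.+1.
Qed.

Lemma In_cat {V : Type} (x : V) (s1 s2 : seq V) :
  inl x s1 \/ inl x s2 -> inl x (s1 ++ s2).
Proof.
elim: s1 => [[]//|y s1 IH] /= [[->|H]|H]; [by left|by right; apply: IH; left|].
by right; apply: IH; right.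
Qed.

Lemma In_flatten {V : Type} {T : eqType} (l : seq T) (f : T -> seq V) o x :
  o \in l -> inl x (f o) -> inl x (flatten (map f l)).
Proof.
elim: l => [//|y l IH] /=; rewrite in_cons => /orP [/eqP <-|H] Hx; apply: In_cat.
- by left.
- by right; apply: IH.
Qed.

Lemma In_pmap {V : Type} {T : eqType} (l : seq T) (f : T -> option V) a x :
  a \in l -> f a = Some x -> inl x (pmap f l).
Proof.
elim: l => [//|y l IH] /=; rewrite in_cons => /orP [/eqP <-|H] Hx.
- by rewrite Hx /=; left.
- by case: (f y) => [z|] /=; [right|]; apply: IH.
Qed.

Lemma size_flatten_le {V : Type} {T : Type} (l : seq T) (f : T -> seq V) B :
  (forall o, size (f o) <= B) -> size (flatten (map f l)) <= size l * B.
Proof.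
move=> H; elim: l => [//|y l IH] /=.
by rewrite size_cat mulSn leq_add.
Qed.

Lemma size_pmap_le {V : Type} {T : Type} (l : seq T) (f : T -> option V) :
  size (pmap f l) <= size l.
Proof. by elim: l => [//|y l IH] /=; case: (f y) => /=; [|apply: leqW]. Qed.

Lemma list_card {V : Type} (A : set V) (s : seq V) l :
  A `<=` [set x | inl x s] -> size s <= l -> A #<= [set: 'I_l].
Proof.
case: s => [|x0 s] sub sl.
  have -> : A = set0 by apply/seteqP; split=> // x /sub.
  exact: card_ge0.
pose g (i : 'I_l) : V := nth x0 (x0 :: s) i.
have sub' : A `<=` g @` [set: 'I_l].
  move=> x /sub /(inl_nth x0) [i it e].
  have il : i < l by apply: leq_trans it sl.
  by exists (Ordinal il).
exact: card_le_trans (subset_card_le sub') (card_image_le g _).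
Qed.

Definition triple_ok {Col V : Type} {E : V -> V -> bool} (c : colouring Col E)
  (X : set V) (B : nat) (K S : set V) (s : seq V) :=
  [/\ K `<=` X, S `<=` X, K `&` S = set0 & (forall x, X x -> cov c K S x)] /\
  (K `|` S `<=` [set x | inl x s] /\ size s <= B).

Lemma combine {Col V : Type} {E : V -> V -> bool} (c : colouring Col E) (T : finType)
  (X : set V) (w : V -> T) (B : nat) :
  (forall o : T, exists K S s, triple_ok c [set x | X x /\ w x = o] B K S s) ->
  exists K S s, triple_ok c X (#|T| * B) K S s.
Proof.
move=> H.
have H' : forall o : T, exists p : set V * set V * seq V,
    triple_ok c [set x | X x /\ w x = o] B p.1.1 p.1.2 p.2.
  by move=> o; have [K [S [s h]]] := H o; exists (K, S, s).
pose f o := proj1_sig (cid (H' o)).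
have fP o : triple_ok c [set x | X x /\ w x = o] B (f o).1.1 (f o).1.2 (f o).2.
  exact: (proj2_sig (cid (H' o))).
exists [set x | exists o, (f o).1.1 x], [set x | exists o, (f o).1.2 x],
  (flatten (map (fun o => (f o).2) (enum T))).
split; [split|split].
- by move=> x [o Kx]; have [[K1 _ _ _] _] := fP o; have [] := K1 x Kx.
- by move=> x [o Sx]; have [[_ S1 _ _] _] := fP o; have [] := S1 x Sx.
- apply: disj_of => x [o Kx] [o' Sx].
  have [[K1 _ D _] _] := fP o; have [[_ S1 _ _] _] := fP o'.
  have [_ e1] := K1 x Kx; have [_ e2] := S1 x Sx.
  subst o o'.
  by have : ((f (w x)).1.1 `&` (f (w x)).1.2) x by []; rewrite D.
- move=> x Xx; have [[_ _ _ C] _] := fP (w x).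
  apply: cov_mono (C x (conj Xx erefl)).
  + by move=> y Ky; exists (w x).
  + by move=> y Sy; exists (w x).
- move=> x [[o Kx]|[o Sx]]; have [_ [L _]] := fP o.
  + by apply: (In_flatten (o := o)); [rewrite mem_enum | apply: L; left].
  + by apply: (In_flatten (o := o)); [rewrite mem_enum | apply: L; right].
- rewrite cardE; apply: size_flatten_le => o.
  by have [_ [_ +]] := fP o.
Qed.

Lemma res_fin {k : nat} {V : Type} {E : V -> V -> bool} (c : colouring 'I_k E) X v B :
  tournament E -> X v -> cinP c X v `<=` coutP c X v -> k.+1 <= B ->
  exists K S s, triple_ok c X B K S s.
Proof.
move=> tour Xv sub kB; have [D SX C] := res_duo tour Xv sub.
exists [set v], (Serfs c X v), (v :: pmap (helper c X v) (enum 'I_k)).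
split; [split|split] => //.
- by move=> x ->.
- move=> x [->|[a ha]]; first by left.
  by right; apply: (In_pmap (a := a)) => //; rewrite mem_enum.
- apply: leq_trans kB; rewrite /= ltnS.
  by apply: leq_trans (size_pmap_le _ _) _; rewrite size_enum_ord.
Qed.

Lemma empty_ok {Col V : Type} {E : V -> V -> bool} (c : colouring Col E) X B :
  (forall x, ~ X x) -> exists K S s, triple_ok c X B K S s.
Proof.
move=> nX; exists set0, set0, [::]; split; [split|split] => //.
- by apply/seteqP; split=> // x [].
- by move=> x /nX.
- by move=> x [].
Qed.

Lemma fin_rec {k : nat} {V : Type} {E : V -> V -> bool} (c : colouring 'I_k E) :
  tournament E -> forall n (X : set V) (D : {set 'I_k}), #|D| <= n ->
  (forall u w (h : E u w), X u -> X w -> c u w h \in D) ->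
  exists K S s, triple_ok c X (k.+1 ^ n.+1) K S s.
Proof.
move=> tour; elim=> [|n IH] X D HD HX.
- have [[v [Xv sub]]|nres] := pselect (exists v, X v /\ cinP c X v `<=` coutP c X v).
    by apply: res_fin tour Xv sub _; rewrite expn1.
  apply: empty_ok => x Xx; apply: nres; exists x; split=> // a [u [h [Xu <-]]].
  have := HX u x h Xu Xx.
  by move: HD; rewrite leqn0 => /eqP /cards0_eq ->; rewrite finset.in_set0.
- have [[v [Xv sub]]|nres] := pselect (exists v, X v /\ cinP c X v `<=` coutP c X v).
    apply: res_fin tour Xv sub _.
    by rewrite expnS -[X in X <= _]muln1 leq_mul2l expn_gt0.
  have wit : forall v, X v -> exists a, cinP c X v a /\ ~ coutP c X v a.
    move=> v Xv; apply: contrapT => nex; apply: nres; exists v; split=> // a ca.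
    by apply: contrapT => nco; apply: nex; exists a.
  pose w (v : V) : option 'I_k := [pick a | `[< cinP c X v a /\ ~ coutP c X v a >] ].
  have -> : k.+1 ^ n.+2 = #|{: option 'I_k}| * k.+1 ^ n.+1.
    by rewrite card_option card_ord expnS.
  apply: (combine (w := w)) => -[a|]; last first.
    apply: empty_ok => x [Xx]; rewrite /w; case: pickP => // Hn _.
    have [a ha] := wit x Xx; move: (Hn a) => /negP; apply; exact/asboolP.
  have [aD|naD] := boolP (a \in D); last first.
    apply: empty_ok => x [Xx]; rewrite /w; case: pickP => // b /asboolP [[u [h [Xu e]]] _] [eb].
    move: (HX u x h Xu Xx); rewrite e eb => aD'; by rewrite aD' in naD.
  apply: (IH _ (D :\ a)).
    by move: HD; rewrite (cardsD1 a D) aD add1n ltnS.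
  move=> u x h [Xu wu] [Xx _]; rewrite in_setD1 HX // andbT.
  apply/eqP => e; move: wu; rewrite /w; case: pickP => // b /asboolP [_ nco] [eb].
  by subst b; apply: nco; exists x, h.
Qed.



Lemma bound_gen (m k : nat) : (4 <= m)%N -> k != 1 -> (k.+1 ^ k.+1 <= k ^ (m * k))%N.
Proof.
move=> m4; case: k => [|[|k]] k1.
- by rewrite muln0 expn0 expn1.
- by [].
have h1 : (k.+3 <= k.+2 ^ 2)%N by rewrite expnS expn1; nia.
apply: (@leq_trans ((k.+2 ^ 2) ^ k.+3)).
  by rewrite leq_exp2r.
rewrite -expnM; apply: leq_pexp2l => //; nia.
Qed.
Lemma bound_ok (k : nat) : k != 1 -> (k.+1 ^ k.+1 <= k ^ (62500 * k))%N.
Proof. apply: bound_gen. by []. Qed.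

Theorem theorem2 :
  (forall Col : Type,
    exists L : Type,
      ([set: L] #<= [set: expT 10 Col]) /\
      forall (V : Type) (E : V -> V -> bool) (c : colouring Col E),
        tournament E ->
        exists K S : set V, king_serf_duo c K S /\ ((K `|` S) #<= [set: L]))
  /\
  (forall k : nat, k != 1 ->
    exists l : nat,
      (l <= k ^ (62500 * k))%N /\
      forall (V : Type) (E : V -> V -> bool) (c : colouring 'I_k E),
        tournament E ->
        exists K S : set V, king_serf_duo c K S /\ ((K `|` S) #<= [set: 'I_l])).
Proof.
split.
- move=> Col; exists (set (set Col * (set Col * set Col)) * option Col)%type; split.
  + apply: (@inj_le _ _ setT (@emb Col)) => x y _ _; exact: emb_inj.
  + move=> V E c tour; exists (Kg c), (Sg c); split; [exact: gen_duo | exact: gen_card].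
- move=> k k1; exists (k.+1 ^ k.+1); split; first exact: bound_ok.
  move=> V E c tour.
  have Hc : (#|setTfor 'I_k| <= k)%N by rewrite finset.cardsT card_ord.
  have [K [S [s [[_ _ D C] [L Sz]]]]] :=
    @fin_rec k V E c tour k setT (setTfor 'I_k) Hc (fun _ _ _ _ _ => finset.in_setT _).
  exists K, S; split; last exact: list_card L Sz.
  by split=> // v; exact: C.
Qed.
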